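(* Let $A$ be a finite set. Then every irreducible sofic subshift $X \subset A^{\mathbb Z}$ is a W-subshift. In particular, every irreducible subshift of finite type $X\subset A^{\mathbb Z}$ is a W-subshift.
   Context: A subshift of $A^{\mathbb Z}$ is a closed shift-invariant subset. $X$ is of finite type if there are a finite $\Omega\subset\mathbb Z$ and $\mathcal P\subset A^\Omega$ with $X=\{x:(gx)|_\Omega\in\mathcal P\ \forall g\in\mathbb Z\}$, where $(gx)(h)=x(h-g)$. $X$ is sofic if there are a finite set $B$, a subshift of finite type $Y\subset B^{\mathbb Z}$ and a surjective continuous shift-equivariant map $Y\to X$. $L(X)$ is the set of finite words (including the empty word) appearing as $x(i)\cdots x(j)$ in some $x\in X$; $|w|$ is word length. $X$ is irreducible if for all $u,v\in L(X)$ there is $w\in L(X)$ with $uwv\in L(X)$. $X$ is a W-subshift if there is an integer $n_0\ge0$ such that for all $u,v\in L(X)$ there is $c\in L(X)$ with $|c|\le n_0$ and $ucv\in L(X)$. *)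

(* Defs.v *)
From mathcomp Require Import all_boot all_order all_algebra.
Set Implicit Arguments. Unset Strict Implicit. Unset Printing Implicit Defensive.
Import GRing.Theory Num.Theory.
Local Open Scope ring_scope.

Definition shift (A : Type) (g : int) (x : int -> A) : int -> A :=
  fun h => x (h - g).

(* Closedness in the product topology of A^Z (A discrete):
   x belongs to X whenever every central window of x is matched by
   some element of X. *)
Definition closed_conf (A : Type) (X : (int -> A) -> Prop) : Prop :=
  forall x : int -> A,
    (forall n : nat, exists y, X y /\
        forall h : int, `|h| <= n%:Z -> y h = x h) -> X x.

Definition shift_invariant (A : Type) (X : (int -> A) -> Prop) : Prop :=
  forall (g : int) (x : int -> A), X x -> X (shift g x).

Definition subshift (A : finType) (X : (int -> A) -> Prop) : Prop :=
  closed_conf X /\ shift_invariant X.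

(* Finite type: a finite window Omega (a finite list of integers) and a
   set P of patterns on Omega (a pattern is the list of values on Omega). *)
Definition is_SFT (A : finType) (X : (int -> A) -> Prop) : Prop :=
  exists (Omega : seq int) (P : seq A -> Prop),
    forall x : int -> A,
      X x <-> (forall g : int, P [seq shift g x w | w <- Omega]).

Definition continuous_on (B A : Type) (Y : (int -> B) -> Prop)
  (phi : (int -> B) -> (int -> A)) : Prop :=
  forall y, Y y -> forall n : nat, exists m : nat, forall y', Y y' ->
    (forall h : int, `|h| <= m%:Z -> y' h = y h) ->
    forall h : int, `|h| <= n%:Z -> phi y' h = phi y h.

Definition sofic (A : finType) (X : (int -> A) -> Prop) : Prop :=
  exists (B : finType) (Y : (int -> B) -> Prop)
         (phi : (int -> B) -> (int -> A)),
    subshift Y /\ is_SFT Y /\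
        (forall y, Y y -> X (phi y)) /\
        (forall x, X x -> exists y, Y y /\ forall h, phi y h = x h) /\
        continuous_on Y phi /\
        (forall (g : int) y, Y y -> forall h, phi (shift g y) h = shift g (phi y) h).

(* w appears as x(i) ... x(i + |w| - 1) in x (empty word included) *)
Definition occurs (A : Type) (w : seq A) (x : int -> A) : Prop :=
  exists i : int, w = [seq x (i + k%:Z) | k <- iota 0 (size w)].

Definition lang (A : Type) (X : (int -> A) -> Prop) (w : seq A) : Prop :=
  exists x, X x /\ occurs w x.

Definition irreducible (A : Type) (X : (int -> A) -> Prop) : Prop :=
  forall u v, lang X u -> lang X v -> exists w, lang X w /\ lang X (u ++ w ++ v).

Definition W_subshift (A : Type) (X : (int -> A) -> Prop) : Prop :=
  exists n0 : nat, forall u v, lang X u -> lang X v ->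
    exists c, lang X c /\ (size c <= n0)%N /\ lang X (u ++ c ++ v).

(* Main.v *)
Require Import Defs.
From mathcomp Require Import all_boot all_order all_algebra zify.
From Stdlib Require Import Classical IndefiniteDescription.
Set Implicit Arguments. Unset Strict Implicit. Unset Printing Implicit Defensive.
Import GRing.Theory Num.Theory.
Local Open Scope ring_scope.

Lemma exb (P : Prop) : exists b : bool, b = true <-> P.
Proof. case: (classic P) => p; [by exists true | by exists false]. Qed.

Definition asb (P : Prop) : bool :=
  proj1_sig (constructive_indefinite_description _ (exb P)).

Lemma asbP (P : Prop) : asb P = true <-> P.
Proof. rewrite /asb; case: constructive_indefinite_description => //. Qed.

Lemma fin_bound (I : finType) (Q : I -> nat -> Prop) :
  (forall i N N', (N <= N')%N -> Q i N -> Q i N') ->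
  (forall i, exists N, Q i N) -> exists N, forall i, Q i N.
Proof.
move=> mono ex.
suff: forall s : seq I, exists N, forall i, i \in s -> Q i N.
  by case/(_ (enum I)) => N HN; exists N => i; apply: HN; rewrite mem_enum.
elim=> [|a s [N HN]]; first by exists 0%N.
have [Na Ha] := ex a.
exists (maxn N Na) => i; rewrite inE => /orP [/eqP -> | Hi].
  by apply: mono Ha; apply: leq_maxr.
by apply: mono (HN _ Hi); apply: leq_maxl.
Qed.

Definition appears (A : Type) (x : int -> A) (i : int) (u : seq A) :=
  u = [seq x (i + k%:Z) | k <- iota 0 (size u)].

Lemma appears_ext (A : Type) (x x' : int -> A) i i' u :
  (forall k, (k < size u)%N -> x (i + k%:Z) = x' (i' + k%:Z)) ->
  appears x i u -> appears x' i' u.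
Proof.
move=> H Hu; rewrite /appears {1}Hu; apply/eq_in_map => k.
by rewrite mem_iota add0n => /andP [_ /H].
Qed.

Lemma cat_inj (A : Type) (s1 s2 s3 s4 : seq A) : size s1 = size s3 ->
  s1 ++ s2 = s3 ++ s4 -> s1 = s3 /\ s2 = s4.
Proof.
move=> Hs E; split.
  by rewrite -(take_size_cat s2 (erefl (size s1))) E Hs take_size_cat.
by rewrite -(drop_size_cat s2 (erefl (size s1))) E Hs drop_size_cat.
Qed.

Lemma appears_cat (A : Type) (x : int -> A) i u v :
  appears x i (u ++ v) <-> appears x i u /\ appears x (i + (size u)%:Z) v.
Proof.
rewrite /appears size_cat iotaD map_cat.
have E2 : [seq x (i + k%:Z) | k <- iota (0 + size u) (size v)] = [seq x (i + (size u)%:Z + k%:Z) | k <- iota 0 (size v)].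
  by rewrite add0n -[in LHS](addn0 (size u)) iotaDl -map_comp; apply: eq_map => k /=; rewrite PoszD addrA.
rewrite E2.
split.
  move=> E; have Hs : size u = size [seq x (i + k%:Z) | k <- iota 0 (size u)].
    by rewrite size_map size_iota.
  by have [H1 H2] := cat_inj Hs E; split; [exact: H1 | exact: H2].
by case=> H1 H2; rewrite -H1 -H2.
Qed.

Definition agr (B : Type) (M : nat) (x y : int -> B) :=
  forall h : int, (absz h < M)%N -> x h = y h.

Section Cluster.
Variables (B : finType) (s : nat -> int -> B).

Definition Inf M x := forall K, exists m, (K <= m)%N /\ agr M (s m) x.

Lemma Inf_step M x : Inf M x -> exists x', agr M x x' /\ Inf M.+1 x'.
Proof.
move=> HI; apply: NNPP => Hn.
pose xp (p : B * B) : int -> B :=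
  fun h => if h == - (M%:Z) then p.1 else if h == M%:Z then p.2 else x h.
have H1 : forall p, exists K, forall m, (K <= m)%N -> ~ agr M.+1 (s m) (xp p).
  move=> p; apply: NNPP => Hp; apply: Hn; exists (xp p); split.
    move=> h hM; rewrite /xp.
    have -> : (h == - M%:Z) = false by apply/eqP; lia.
    by have -> : (h == M%:Z) = false by apply/eqP; lia.
  move=> K; apply: NNPP => HK; apply: Hp; exists K => m Km Ha; apply: HK.
  by exists m.
have [K0 HK0] := fin_bound (Q := fun p K => forall m, (K <= m)%N -> ~ agr M.+1 (s m) (xp p))
   (fun p N N' le H m le' => H m (leq_trans le le')) H1.
have [m [Km Ha]] := HI K0.
apply: (HK0 (s m (- M%:Z), s m M%:Z) m Km) => h hM; rewrite /xp /=.
case: eqP => [-> //|h1]; case: eqP => [-> //|h2].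
apply: Ha; lia.
Qed.

Lemma exG M x : exists x', Inf M x -> agr M x x' /\ Inf M.+1 x'.
Proof.
case: (classic (Inf M x)) => H; last by exists x.
by have [x' Hx'] := Inf_step H; exists x'.
Qed.

Definition stepf M x := proj1_sig (constructive_indefinite_description _ (exG M x)).

Fixpoint xs (M : nat) : int -> B :=
  match M with 0 => s 0%N | M'.+1 => stepf M' (xs M') end.

Lemma stepfP M x : Inf M x -> agr M x (stepf M x) /\ Inf M.+1 (stepf M x).
Proof. by rewrite /stepf; case: constructive_indefinite_description. Qed.

Lemma xs_inf M : Inf M (xs M) /\ agr M (xs M) (xs M.+1).
Proof.
elim: M => [|M [IH1 IH2]].
  split; first by move=> K; exists K; split => // h.
  by move=> h; lia.
have HI : Inf M.+1 (xs M.+1) by exact: (stepfP IH1).2.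
by split=> //; exact: (stepfP HI).1.
Qed.

Lemma xs_coh M N : (M <= N)%N -> agr M (xs M) (xs N).
Proof.
move=> /subnK <-; elim: (N - M)%N => [|d IH]; first by rewrite add0n.
move=> h hM; rewrite (IH h hM) addSn; apply: (xs_inf (d + M)).2; lia.
Qed.

Definition ylim : int -> B := fun h => xs (absz h).+1 h.

Lemma cluster : forall M K, exists m, (K <= m)%N /\ agr M (s m) ylim.
Proof.
move=> M K; have [m [Km Ha]] := (xs_inf M).1 K; exists m; split => // h hM.
rewrite (Ha h hM) /ylim; symmetry; apply: xs_coh => //; lia.
Qed.

End Cluster.

Lemma unif (A B : finType) (Y : (int->B)->Prop) (phi : (int->B)->(int->A)) :
  closed_conf Y -> continuous_on Y phi ->
  exists m : nat, forall y y', Y y -> Y y' ->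
    (forall h : int, `|h| <= m%:Z -> y h = y' h) -> phi y 0 = phi y' 0.
Proof.
move=> cY cphi; apply: NNPP => Hn.
have H : forall m : nat, exists p : (int->B)*(int->B), Y p.1 /\ Y p.2 /\
    (forall h : int, `|h| <= m%:Z -> p.1 h = p.2 h) /\ phi p.1 0 <> phi p.2 0.
  move=> m; apply: NNPP => Hm; apply: Hn; exists m => y y' Yy Yy' Hyy'.
  by apply: NNPP => Hne; apply: Hm; exists (y, y').
pose sp m := proj1_sig (constructive_indefinite_description _ (H m)).
have spP m : Y (sp m).1 /\ Y (sp m).2 /\
    (forall h : int, `|h| <= m%:Z -> (sp m).1 h = (sp m).2 h) /\ phi (sp m).1 0 <> phi (sp m).2 0.
  exact: (proj2_sig (constructive_indefinite_description _ (H m))).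
pose s m := (sp m).1.
have Yl : Y (ylim s).
  apply: cY => n; have [m [_ Ha]] := cluster s n.+1 0; exists (s m); split; first by case: (spP m).
  move=> h hn; apply: Ha; lia.
have [M HM] := cphi _ Yl 0%N.
have [m [Km Ha]] := cluster s M.+1 M.
case: (spP m) => Y1 [Y2 [E Hne]]; apply: Hne.
have e1 : phi (sp m).1 0 = phi (ylim s) 0.
  by apply: (HM _ Y1) => // h hM; apply: Ha; lia.
have e2 : phi (sp m).2 0 = phi (ylim s) 0.
  apply: (HM _ Y2) => // h hM; rewrite -E; last by lia.
  by apply: Ha; lia.
by rewrite e1 e2.
Qed.

Lemma local_rule (A B : finType) (Y : (int->B)->Prop) (phi : (int->B)->(int->A)) (m : nat) :
  shift_invariant Y ->
  (forall (g : int) y, Y y -> forall h, phi (shift g y) h = shift g (phi y) h) ->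
  (forall y y', Y y -> Y y' ->
    (forall h : int, `|h| <= m%:Z -> y h = y' h) -> phi y 0 = phi y' 0) ->
  forall y y' j, Y y -> Y y' -> (forall h : int, `|h| <= m%:Z -> y (h + j) = y' (h + j)) ->
    phi y j = phi y' j.
Proof.
move=> sY eq Hm y y' j Yy Yy' Hyy.
have E z : Y z -> phi z j = phi (shift (- j) z) 0.
  by move=> Yz; rewrite eq // /shift sub0r opprK.
rewrite (E y Yy) (E y' Yy'); apply: Hm; try exact: sY.
by move=> h hm; rewrite /shift opprK; apply: Hyy.
Qed.

Lemma sft_splice (B : finType) (Y : (int -> B) -> Prop) (Omega : seq int) (P : seq B -> Prop) :
  (forall x, Y x <-> (forall g : int, P [seq shift g x w | w <- Omega])) ->
  forall z, (forall g : int, exists y, Y y /\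
     forall h : int, (absz (h + g)%R <= \max_(w <- Omega) absz w)%N -> z h = y h) -> Y z.
Proof.
move=> HY z Hz; apply/HY => g; have [y [Yy Hy]] := Hz g.
have -> : [seq shift g z w | w <- Omega] = [seq shift g y w | w <- Omega].
  apply/eq_in_map => w wO; rewrite /shift; apply: Hy; rewrite subrK.
  by apply: (@leq_bigmax_seq _ _ _ (fun w : int => absz w)) => //.
by apply: (proj1 (HY y) Yy).
Qed.

Section Main.
Variables (A B : finType) (X : (int->A)->Prop) (Y : (int->B)->Prop)
  (phi : (int->B)->(int->A)) (Omega : seq int) (P : seq B -> Prop) (m : nat).
Hypothesis sY : shift_invariant Y.
Hypothesis eqv : forall (g : int) y, Y y -> forall h, phi (shift g y) h = shift g (phi y) h.
Hypothesis phiX : forall y, Y y -> X (phi y).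
Hypothesis surj : forall x, X x -> exists y, Y y /\ forall h, phi y h = x h.
Hypothesis HY : forall x, Y x <-> (forall g : int, P [seq shift g x w | w <- Omega]).
Hypothesis Hm : forall y y' j, Y y -> Y y' ->
   (forall h : int, (absz h <= m)%N -> y (h + j) = y' (h + j)) -> phi y j = phi y' j.

Definition R := (\max_(w <- Omega) absz w)%N.
Definition K := maxn m R.
Lemma hKm : (m <= K)%N. Proof. exact: leq_maxl. Qed.
Lemma hKR : (R <= K)%N. Proof. exact: leq_maxr. Qed.

Definition blk (y : int -> B) (a : int) : {ffun 'I_(2*K) -> B} :=
  [ffun i : 'I_(2*K) => y (a + (i : nat)%:Z)].

Lemma blk_eq y y' a b : blk y a = blk y' b ->
  forall h, a <= h -> h < a + (2*K)%N%:Z -> y h = y' (h - a + b).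
Proof.
move=> E h h1 h2.
have Hi : (absz (h - a) < 2 * K)%N by lia.
have := congr1 (fun f : {ffun 'I_(2*K) -> B} => f (Ordinal Hi)) E; rewrite !ffunE /=.
have -> : (absz (h - a))%:Z = h - a by lia.
by rewrite addrC subrK [_ + b]addrC.
Qed.

Definition T := ({ffun 'I_(2*K) -> B} * {ffun 'I_(2*K) -> B})%type.

Definition D (w : seq A) (q : T) := exists y, Y y /\ appears (phi y) 0 w /\
  blk y (- K%:Z) = q.1 /\ blk y ((size w)%:Z - K%:Z) = q.2.

Lemma transfer w w' p s : (forall q, D w q -> D w' q) ->
  lang X (p ++ w ++ s) -> lang X (p ++ w' ++ s).
Proof.
move=> Hww [x [Xx [i Hi]]].
have [z0 [Yz0 Ez0]] := surj Xx.
pose np := (size p)%:Z; pose n := (size w)%:Z; pose n' := (size w')%:Z.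
have enp : np = (size p)%:Z := erefl. have en : n = (size w)%:Z := erefl. have en' : n' = (size w')%:Z := erefl.
pose z := shift (-(i + np)) z0.
have Yz : Y z by apply: sY.
have phiz j : phi z j = x (j + (i + np)) by rewrite eqv // /shift opprK Ez0.
have Ap : appears (phi z) (-np) (p ++ w ++ s).
  by apply: appears_ext Hi => k _; rewrite phiz; congr x; lia.
move/appears_cat: Ap => [Ap1 /appears_cat [Aw As]].
have e0 : - np + (size p)%:Z = 0 by lia.
rewrite e0 in Aw As.
have Dq : D w (blk z (- K%:Z), blk z (n - K%:Z)) by exists z.
have [y' [Yy' [Aw' [B1 B2]]]] := Hww _ Dq.
rewrite /= in B1 B2.
pose zs := shift (n' - n) z.
have Yzs : Y zs by apply: sY.
pose z' h := if h < 0 then z h else if h < n' then y' h else zs h.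
have KK := hKm; have KR := hKR.
have b1 h : - K%:Z <= h -> h < K%:Z -> y' h = z h.
  move=> h1 h2; rewrite (blk_eq B1); [congr z; lia | lia | lia].
have b2 h : n' - K%:Z <= h -> h < n' + K%:Z -> y' h = zs h.
  move=> h1 h2; rewrite (blk_eq B2); [rewrite /zs /shift; congr z; lia | lia | lia].
have F1 h : h < K%:Z -> z' h = z h.
  move=> hK; rewrite /z'; case: ifPn => h0 //; case: ifPn => h1.
    by apply: b1; lia.
  by rewrite -b2; [apply: b1 | |]; lia.
have F2 h : - K%:Z <= h -> h < n' + K%:Z -> z' h = y' h.
  move=> hK1 hK2; rewrite /z'; case: ifPn => h0 //; last case: ifPn => h1 //.
    by rewrite b1 //; lia.
  by rewrite b2 //; lia.
have F3 h : n' - K%:Z <= h -> z' h = zs h.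
  move=> hK; rewrite /z'; case: ifPn => h0; last case: ifPn => h1 //.
    by rewrite -b1 ?b2 //; lia.
  by rewrite b2 //; lia.
have Yz' : Y z'.
  apply: (sft_splice HY) => g; rewrite -/R.
  case: (ltrP (- g + R%:Z) K%:Z) => c1.
    by exists z; split => // h hR; apply: F1; lia.
  case: (lerP (n' - K%:Z) (- g - R%:Z)) => c2.
    by exists zs; split => // h hR; apply: F3; lia.
  by exists y'; split => // h hR; apply: F2; lia.
have A1 : appears (phi z') (- np) p.
  apply: appears_ext Ap1 => k hk; apply: Hm => // h hm; rewrite F1 //; lia.
have A2 : appears (phi z') 0 w'.
  apply: appears_ext Aw' => k hk; apply: Hm => // h hm; rewrite F2 //; lia.
have A3 : appears (phi z') n' s.
  apply: appears_ext As => k hk.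
  have -> : phi z' (n' + k%:Z) = phi zs (n' + k%:Z).
    by apply: Hm => // h hm; rewrite F3 //; lia.
  rewrite /zs [RHS]eqv // /shift; apply: (congr1 (phi z)); lia.
exists (phi z'); split; first exact: phiX.
exists (- np); apply/appears_cat; split => //.
rewrite e0; apply/appears_cat; split => //.
Qed.

End Main.

Lemma sofic_W (A : finType) (X : (int -> A) -> Prop) :
  irreducible X -> sofic X -> W_subshift X.
Proof.
move=> irr [B [Y [phi [[cY sY] [[Omega [P HY]] [phiX [surj [cont eqv]]]]]]]].
have [m Hm0] := unif cY cont.
have Hm : forall y y' j, Y y -> Y y' ->
    (forall h : int, (absz h <= m)%N -> y (h+j) = y' (h+j)) -> phi y j = phi y' j.
  move=> y y' j Yy Yy' H; apply: (local_rule sY eqv Hm0) => // h hm; apply: H; lia.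
pose TT := ({ffun 'I_(2 * K Omega m) -> B} * {ffun 'I_(2 * K Omega m) -> B})%type.
pose Dset w : {set TT} := [set q : TT | asb (D Y phi w q)].
have [N HN] := fin_bound (I := {set TT})
  (Q := fun S N => forall w, lang X w -> Dset w = S ->
          exists w', lang X w' /\ (size w' <= N)%N /\ Dset w' = S)
  (fun S N N' le H w Lw E => match H w Lw E with
     ex_intro w' (conj a (conj b c)) => ex_intro _ w' (conj a (conj (leq_trans b le) c)) end)
  (fun S => match classic (exists w, lang X w /\ Dset w = S) with
     | or_introl (ex_intro w (conj Lw Ew)) =>
         ex_intro _ (size w) (fun w0 _ _ => ex_intro _ w (conj Lw (conj (leqnn _) Ew)))
     | or_intror nex => ex_intro _ 0%N (fun w0 Lw0 E0 => False_ind _ (nex (ex_intro _ w0 (conj Lw0 E0))))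
     end).
exists N => u v Lu Lv.
have [c [Lc Luv]] := irr u v Lu Lv.
have [c' [Lc' [Sc' Ec']]] := HN _ c Lc erefl.
exists c'; split => //; split => //.
apply: (transfer sY eqv phiX surj HY Hm (w := c)) => // q Dq.
have : q \in Dset c by rewrite inE; apply/asbP.
by rewrite -Ec' inE => /asbP.
Qed.

Lemma SFT_sofic (A : finType) (X : (int -> A) -> Prop) :
  subshift X -> is_SFT X -> sofic X.
Proof.
move=> sX HX; exists A, X, id; split => //; split => //; split => //.
split; first by move=> x Xx; exists x.
split => //; by move=> y _ n; exists n => y' _ H h hn; apply: H.
Qed.

Theorem proposition4p4 (A : finType) :
  (forall X : (int -> A) -> Prop,
      subshift X -> irreducible X -> sofic X -> W_subshift X) /\
  (forall X : (int -> A) -> Prop,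
      subshift X -> irreducible X -> is_SFT X -> W_subshift X).
Proof.
split=> X sX irr H; apply: sofic_W => //; exact: SFT_sofic.
Qed.
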